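(* Let $\mathbb F$ be an algebraically closed field of characteristic not two. Every finite-dimensional associative algebra $R$ (without identity) over $\mathbb F$ with $R^3=0$ and $\dim R^2=2$ is isomorphic to exactly one algebra on $\mathbb F^{2+n}$, for some $n\ge 2$, with multiplication \[ uv=\left(u^T\begin{bmatrix}0_2&0\\0&A\end{bmatrix}v,\ u^T\begin{bmatrix}0_2&0\\0&B\end{bmatrix}v,\ 0,\dots,0\right)^T \] given by $n$-by-$n$ matrices $A$ and $B$ that are linearly independent (i.e. $aA+bB=0$ implies $a=b=0$). The pair $(A,B)$ is determined by $R$ uniquely up to congruence $(A,B)\mapsto(S^TAS,S^TBS)$ ($S$ nonsingular) and linear substitutions $(A,B)\mapsto(r_{11}A+r_{12}B,\ r_{21}A+r_{22}B)$ with $[r_{ij}]$ nonsingular.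
   Context: An algebra without identity is a finite-dimensional vector space $R$ over $\mathbb F$ with a bilinear associative multiplication; $R^2$ (resp. $R^3$) is the subspace spanned by all products $uv$ (resp. $uvw$). Here $0_2$ is the $2\times 2$ zero matrix and vectors of $\mathbb F^{2+n}$ are columns. *)

(* Defs.v *)
From HB Require Import structures.
From mathcomp Require Import all_boot all_order all_algebra.
Set Implicit Arguments. Unset Strict Implicit. Unset Printing Implicit Defensive.
Import GRing.Theory.
Local Open Scope ring_scope.

Definition is_assoc_algebra (F : fieldType) (V : vectType F) (mul : V -> V -> V) :=
  [/\ (forall (a : F) (u v w : V), mul (a *: u + v) w = a *: mul u w + mul v w),
      (forall (a : F) (u v w : V), mul w (a *: u + v) = a *: mul w u + mul w v) &
      (forall u v w : V, mul (mul u v) w = mul u (mul v w))].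

Definition is_R2 (F : fieldType) (V : vectType F) (mul : V -> V -> V)
  (U : {vspace V}) :=
  (forall u v, mul u v \in U) /\
  (forall W : {vspace V}, (forall u v, mul u v \in W) -> (U <= W)%VS).

Definition R3_zero (F : fieldType) (V : vectType F) (mul : V -> V -> V) :=
  forall u v w : V, mul (mul u v) w = 0.

Definition alg_iso (F : fieldType) (V1 V2 : vectType F)
  (mul1 : V1 -> V1 -> V1) (mul2 : V2 -> V2 -> V2) :=
  exists f : V1 -> V2,
    [/\ (forall (a : F) (u v : V1), f (a *: u + v) = a *: f u + f v),
        bijective f &
        (forall u v : V1, f (mul1 u v) = mul2 (f u) (f v))].

Definition blk (F : fieldType) (n : nat) (A : 'M[F]_n) : 'M[F]_(2 + n) :=
  block_mx (0 : 'M[F]_(2, 2)) 0 0 A.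

Definition ABmul (F : fieldType) (n : nat) (A B : 'M[F]_n)
  (u v : 'cV[F]_(2 + n)) : 'cV[F]_(2 + n) :=
  \col_(i < 2 + n)
    (if (i : nat) == 0%N then (u^T *m blk A *m v) ord0 ord0
     else if (i : nat) == 1%N then (u^T *m blk B *m v) ord0 ord0
     else 0).

Definition lin_indep2 (F : fieldType) (n : nat) (A B : 'M[F]_n) :=
  forall a b : F, a *: A + b *: B = 0 -> a = 0 /\ b = 0.

Definition i0 : 'I_2 := ord0.
Definition i1 : 'I_2 := ord_max.

(* (A', B') is obtained from (A, B) by a congruence (S nonsingular) and a
   nonsingular linear substitution r (these operations commute, so every
   composite of them has this form). *)
Definition pair_equiv (F : fieldType) (n : nat) (A B A' B' : 'M[F]_n) :=
  exists (S : 'M[F]_n) (r : 'M[F]_2),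
    [/\ S \in unitmx, r \in unitmx,
        A' = S^T *m (r i0 i0 *: A + r i0 i1 *: B) *m S &
        B' = S^T *m (r i1 i0 *: A + r i1 i1 *: B) *m S].

Definition pair_equiv_dep (F : fieldType) (n n' : nat) (A B : 'M[F]_n)
  (A' B' : 'M[F]_n') :=
  exists e : n' = n, pair_equiv A B (castmx (e, e) A') (castmx (e, e) B').

(* Main.v *)
Require Import Defs.
From HB Require Import structures.
From mathcomp Require Import all_boot all_order all_algebra ring.
Import GRing.Theory.
Set Implicit Arguments. Unset Strict Implicit. Unset Printing Implicit Defensive.
Local Open Scope ring_scope.


Lemma mul0l (F : fieldType) (V : vectType F) (mul : V -> V -> V)
  (H : is_assoc_algebra mul) w : mul 0 w = 0.
Proof.
case: H => Hl _ _; have := Hl 1 0 0 w; rewrite !scale1r addr0.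
by move/(congr1 (fun z => z - mul 0 w)); rewrite /= subrr addrK => <-.
Qed.

Lemma mul0r (F : fieldType) (V : vectType F) (mul : V -> V -> V)
  (H : is_assoc_algebra mul) w : mul w 0 = 0.
Proof.
case: H => _ Hr _; have := Hr 1 0 0 w; rewrite !scale1r addr0.
by move/(congr1 (fun z => z - mul w 0)); rewrite /= subrr addrK => <-.
Qed.

Lemma mulDl (F : fieldType) (V : vectType F) (mul : V -> V -> V)
  (H : is_assoc_algebra mul) u v w : mul (u + v) w = mul u w + mul v w.
Proof. by case: H => Hl _ _; have := Hl 1 u v w; rewrite !scale1r. Qed.

Lemma mulDr (F : fieldType) (V : vectType F) (mul : V -> V -> V)
  (H : is_assoc_algebra mul) u v w : mul w (u + v) = mul w u + mul w v.
Proof. by case: H => _ Hr _; have := Hr 1 u v w; rewrite !scale1r. Qed.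

Lemma mulZl (F : fieldType) (V : vectType F) (mul : V -> V -> V)
  (H : is_assoc_algebra mul) a u w : mul (a *: u) w = a *: mul u w.
Proof. by case: (H) => Hl _ _; have := Hl a u 0 w; rewrite addr0 (mul0l H) addr0. Qed.

Lemma mulZr (F : fieldType) (V : vectType F) (mul : V -> V -> V)
  (H : is_assoc_algebra mul) a u w : mul w (a *: u) = a *: mul w u.
Proof. by case: (H) => _ Hr _; have := Hr a u 0 w; rewrite addr0 (mul0r H) addr0. Qed.

Lemma mul_suml (F : fieldType) (V : vectType F) (mul : V -> V -> V)
  (H : is_assoc_algebra mul) (I : Type) (r : seq I) (P : pred I) (f : I -> V) w :
  mul (\sum_(i <- r | P i) f i) w = \sum_(i <- r | P i) mul (f i) w.
Proof.
elim/big_rec2: _ => [|i y1 y2 _ <-]; first exact: mul0l.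
exact: mulDl.
Qed.

Lemma mul_sumr (F : fieldType) (V : vectType F) (mul : V -> V -> V)
  (H : is_assoc_algebra mul) (I : Type) (r : seq I) (P : pred I) (f : I -> V) w :
  mul w (\sum_(i <- r | P i) f i) = \sum_(i <- r | P i) mul w (f i).
Proof.
elim/big_rec2: _ => [|i y1 y2 _ <-]; first exact: mul0r.
exact: mulDr.
Qed.

Lemma bilin_entry (F : fieldType) n (M : 'M[F]_n) i j :
  (((delta_mx i (0 : 'I_1) : 'cV[F]_n)^T *m M *m (delta_mx j (0 : 'I_1) : 'cV[F]_n)) 0 0) = M i j.
Proof. by rewrite trmx_delta -rowE -colE !mxE. Qed.

Lemma bilin_eq (F : fieldType) n (M N : 'M[F]_n) :
  (forall x y : 'cV_n, (x^T *m M *m y) 0 0 = (x^T *m N *m y) 0 0) -> M = N.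
Proof. by move=> H; apply/matrixP => i j; rewrite -(bilin_entry M) -(bilin_entry N) H. Qed.

Definition qf (F : fieldType) n (A B : 'M[F]_n) (x y : 'cV_n) : 'cV[F]_2 :=
  \col_(i < 2) (if (i : nat) == 0%N then (x^T *m A *m y) 0 0 else (x^T *m B *m y) 0 0).

Lemma blk_form (F : fieldType) n (A : 'M[F]_n) (u v : 'cV_(2 + n)) :
  u^T *m blk A *m v = (dsubmx u)^T *m A *m dsubmx v.
Proof.
rewrite -[u]vsubmxK -[v]vsubmxK /blk tr_col_mx mul_row_block mul_row_col.
by rewrite !col_mxKd !mulmx0 !add0r mul0mx add0r.
Qed.

Lemma ABmulE (F : fieldType) n (A B : 'M[F]_n) (u v : 'cV_(2 + n)) :
  ABmul A B u v = col_mx (qf A B (dsubmx u) (dsubmx v)) 0.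
Proof.
apply/matrixP => i j; rewrite (ord1 j) [LHS]mxE [RHS]mxE.
case: splitP => k Hk; rewrite Hk.
  case: k Hk => [[|[|//]]] ? Hk; by rewrite [RHS]mxE !blk_form.
by rewrite [RHS]mxE /=.
Qed.

Lemma ord2_cases (i : 'I_2) : i = i0 \/ i = i1.
Proof. by case: i => [[|[|//]]] Hi; [left|right]; apply: val_inj. Qed.

Lemma lift00 : lift ord0 (ord0 : 'I_1) = i1.
Proof. by apply: val_inj. Qed.

Lemma conj_cancel (F : fieldType) n (S M : 'M[F]_n) (x y : 'cV_n) :
  S \in unitmx ->
  (invmx S *m x)^T *m (S^T *m M *m S) *m (invmx S *m y) = x^T *m M *m y.
Proof.
move=> Su; have H1 : (invmx S)^T *m S^T = 1%:M by rewrite -trmx_mul mulmxV // trmx1.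
rewrite trmx_mul !mulmxA -[x^T *m _ *m S^T]mulmxA H1 mulmx1.
by rewrite -[_ *m S *m invmx S]mulmxA mulmxV // mulmx1.
Qed.

Lemma bil_lin (F : fieldType) n (a b : F) (A B : 'M[F]_n) (x y : 'cV_n) :
  (x^T *m (a *: A + b *: B) *m y) 0 0 = a * (x^T *m A *m y) 0 0 + b * (x^T *m B *m y) 0 0.
Proof.
have eD (P Q : 'M[F]_1) : (P + Q) 0 0 = P 0 0 + Q 0 0 by rewrite mxE.
have eZ c (P : 'M[F]_1) : (c *: P) 0 0 = c * P 0 0 by rewrite mxE.
by rewrite mulmxDr mulmxDl -!scalemxAr -!scalemxAl eD !eZ.
Qed.

Lemma qf_equiv (F : fieldType) n (A B : 'M[F]_n) (S : 'M[F]_n) (r : 'M[F]_2) x y :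
  S \in unitmx ->
  qf (S^T *m (r i0 i0 *: A + r i0 i1 *: B) *m S) (S^T *m (r i1 i0 *: A + r i1 i1 *: B) *m S)
     (invmx S *m x) (invmx S *m y) = r *m qf A B x y.
Proof.
move=> Su; apply/matrixP => i j; rewrite (ord1 j) [LHS]mxE [RHS]mxE.
rewrite !big_ord_recl big_ord0 addr0 lift00.
rewrite [qf _ _ _ _ ord0 _]mxE [qf _ _ _ _ i1 _]mxE /=.
by case: (ord2_cases i) => ->; rewrite /= !conj_cancel // bil_lin.
Qed.

Lemma dsub_ublock (F : fieldType) n (P : 'M[F]_2) (Q : 'M[F]_(2, n)) (S : 'M[F]_n) (u : 'cV_(2 + n)) :
  dsubmx (block_mx P Q 0 S *m u) = S *m dsubmx u.
Proof. by rewrite -{1}[u]vsubmxK mul_block_col col_mxKd mul0mx add0r. Qed.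

Lemma iso_of_equiv (F : fieldType) n (A B A' B' : 'M[F]_n) :
  pair_equiv A B A' B' -> alg_iso (ABmul A B) (ABmul A' B').
Proof.
case=> S [r] [Su ru -> ->].
set G := block_mx r 0 0 (invmx S).
have Gu : G \in unitmx.
  by rewrite unitmxE det_ublock unitrM -!unitmxE ru unitmx_inv Su.
exists (fun x => G *m x); split.
- by move=> a u v; rewrite mulmxDr scalemxAr.
- by exists (fun x => invmx G *m x) => x; [exact: mulKmx | exact: mulKVmx].
move=> u v; rewrite !ABmulE !dsub_ublock qf_equiv // /G mul_block_col.
by rewrite !mulmx0 mul0mx !addr0.
Qed.

Lemma linear_mx (F : fieldType) m p (g : 'cV[F]_m -> 'cV[F]_p) :
  (forall a u v, g (a *: u + v) = a *: g u + g v) ->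
  exists G : 'M_(p, m), forall x, g x = G *m x.
Proof.
move=> gl.
have g0 : g 0 = 0.
  have := gl 1 0 0; rewrite !scale1r addr0.
  by move/(congr1 (fun z => z - g 0)); rewrite /= subrr addrK => <-.
have gs (I : Type) (r : seq I) (P : pred I) (f : I -> 'cV_m) :
    g (\sum_(i <- r | P i) f i) = \sum_(i <- r | P i) g (f i).
  elim/big_rec2: _ => [//|i y1 y2 _ <-].
  by have := gl 1 (f i) y2; rewrite !scale1r.
have gZ a u : g (a *: u) = a *: g u by rewrite -[a *: u]addr0 gl g0 addr0.
exists (\matrix_(i, j) g (delta_mx j 0) i 0) => x.
rewrite {1}[x]matrix_sum_delta gs.
apply/matrixP => k l; rewrite (ord1 l) summxE [RHS]mxE.
apply: eq_bigr => i _; rewrite big_ord1 gZ !mxE mulrC.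
by rewrite (ord1 (0 : 'I_1)).
Qed.

Lemma inv_id (F : fieldType) m p (g : 'cV[F]_m -> 'cV[F]_p) (h : 'cV[F]_p -> 'cV[F]_m)
  (G : 'M_(p, m)) (H : 'M_(m, p)) :
  cancel g h -> (forall x, g x = G *m x) -> (forall x, h x = H *m x) ->
  H *m G = 1%:M.
Proof.
move=> gK HG HH; apply/matrixP => i j.
have := gK (delta_mx j 0); move/matrixP/(_ i 0).
rewrite HH HG mulmxA -colE [col _ _ _ _]mxE => ->.
by rewrite !mxE eqxx andbT eq_sym.
Qed.


Lemma qf_i0 (F : fieldType) n (A B : 'M[F]_n) x y : qf A B x y i0 0 = (x^T *m A *m y) 0 0.
Proof. by rewrite mxE. Qed.
Lemma qf_i1 (F : fieldType) n (A B : 'M[F]_n) x y : qf A B x y i1 0 = (x^T *m B *m y) 0 0.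
Proof. by rewrite mxE. Qed.
Lemma mul2E (F : fieldType) m (P : 'M[F]_(m, 2)) (q : 'cV[F]_2) i :
  (P *m q) i 0 = P i i0 * q i0 0 + P i i1 * q i1 0.
Proof. by rewrite mxE !big_ord_recl big_ord0 addr0 lift00. Qed.

Lemma conj_back (F : fieldType) n (S M : 'M[F]_n) :
  S \in unitmx -> (invmx S)^T *m (S^T *m M *m S) *m invmx S = M.
Proof.
move=> Su; have H1 : (invmx S)^T *m S^T = 1%:M by rewrite -trmx_mul mulmxV // trmx1.
rewrite !mulmxA H1 mul1mx.
by rewrite -[_ *m S *m invmx S]mulmxA mulmxV // mulmx1.
Qed.

Lemma bil_S (F : fieldType) n (S M : 'M[F]_n) (x y : 'cV_n) :
  x^T *m (S^T *m M *m S) *m y = (S *m x)^T *m M *m (S *m y).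
Proof. by rewrite trmx_mul !mulmxA. Qed.

Lemma iso_to_equiv (F : fieldType) n n' (A B : 'M[F]_n) (A' B' : 'M[F]_n') :
  lin_indep2 A B -> alg_iso (ABmul A B) (ABmul A' B') -> pair_equiv_dep A B A' B'.
Proof.
move=> LI [g [gl [ginv gK Kg] gm]].
have ginvl : forall a u v, ginv (a *: u + v) = a *: ginv u + ginv v.
  by move=> a u v; apply: (can_inj gK); rewrite gl !Kg.
have [G HG] := linear_mx gl; have [H HH] := linear_mx ginvl.
have HGid := inv_id gK HG HH; have GHid := inv_id Kg HH HG.
have e : n' = n.
  have le1 : (2 + n <= 2 + n')%N.
    rewrite -{1}(mxrank1 F (2 + n)) -HGid.
    exact: leq_trans (mxrankM_maxr _ _) (rank_leq_row _).
  have le2 : (2 + n' <= 2 + n)%N.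
    rewrite -{1}(mxrank1 F (2 + n')) -GHid.
    exact: leq_trans (mxrankM_maxr _ _) (rank_leq_row _).
  by apply/eqP; rewrite eqn_leq -(leq_add2l 2) le2 -(leq_add2l 2) le1.
subst n'; exists erefl; rewrite !castmx_id.
set P := ulsubmx G; set Q := ursubmx G; set D := dlsubmx G; set S := drsubmx G.
have GE : G = block_mx P Q D S by rewrite submxK.
have key x y := gm (col_mx 0 x) (col_mx 0 y).
have D0 : D = 0.
  have Dq x y : D *m qf A B x y = 0.
    move: (key x y); rewrite !HG !ABmulE !col_mxKd {1}GE mul_block_col.
    by move/(congr1 dsubmx); rewrite !col_mxKd mulmx0 addr0.
  have Dk k : D k i0 = 0 /\ D k i1 = 0.
    apply: LI; apply: bilin_eq => x y.
    rewrite bil_lin mulmx0 mul0mx [RHS]mxE -(qf_i0 A B) -(qf_i1 A B) -mul2E Dq.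
    by rewrite mxE.
  apply/matrixP => k i; rewrite [RHS]mxE.
  by case: (ord2_cases i) => ->; case: (Dk k).
have [_ Gu] := mulmx1_unit HGid.
move: Gu; rewrite GE D0 unitmxE det_ublock unitrM -!unitmxE => /andP[Pu Su].
have rel x y : qf A' B' (S *m x) (S *m y) = P *m qf A B x y.
  move: (key x y); rewrite !HG !ABmulE !col_mxKd GE D0 !mul_block_col.
  rewrite !mulmx0 !mul0mx !addr0 !add0r !col_mxKd.
  by move/(congr1 usubmx); rewrite !col_mxKu => ->.
have EA : S^T *m A' *m S = P i0 i0 *: A + P i0 i1 *: B.
  apply: bilin_eq => x y; rewrite bil_lin bil_S -(qf_i0 A' B') rel mul2E.
  by rewrite qf_i0 qf_i1.
have EB : S^T *m B' *m S = P i1 i0 *: A + P i1 i1 *: B.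
  apply: bilin_eq => x y; rewrite bil_lin bil_S -(qf_i1 A' B') rel mul2E.
  by rewrite qf_i0 qf_i1.
exists (invmx S), P; split => //; first by rewrite unitmx_inv.
  by rewrite -EA conj_back.
by rewrite -EB conj_back.
Qed.


Lemma indep_n2 (F : fieldType) n (A B : 'M[F]_n) : lin_indep2 A B -> (2 <= n)%N.
Proof.
case: n A B => [|[|n]] A B LI //.
  have := LI 1 0; rewrite scale1r scale0r addr0 flatmx0 => /(_ erefl) [/eqP].
  by rewrite oner_eq0.
have := LI (B 0 0) (- A 0 0).
case.
  by apply/matrixP => i j; rewrite (ord1 i) (ord1 j) !mxE mulNr mulrC subrr.
move=> _ hA; have A0 : A = 0.
  by apply/matrixP => i j; rewrite (ord1 i) (ord1 j) [RHS]mxE; apply/eqP; rewrite -oppr_eq0 hA.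
have := LI 1 0; rewrite scale1r scale0r addr0 A0 => /(_ erefl) [/eqP].
by rewrite oner_eq0.
Qed.

Lemma iso_sym (F : fieldType) (V1 V2 : vectType F) (m1 : V1 -> V1 -> V1) (m2 : V2 -> V2 -> V2) :
  alg_iso m1 m2 -> alg_iso m2 m1.
Proof.
case=> f [fl [g fK gK] fm]; exists g; split.
- by move=> a u v; apply: (can_inj fK); rewrite fl !gK.
- by exists f.
- by move=> u v; apply: (can_inj fK); rewrite fm !gK.
Qed.

Lemma iso_trans (F : fieldType) (V1 V2 V3 : vectType F) (m1 : V1 -> V1 -> V1)
  (m2 : V2 -> V2 -> V2) (m3 : V3 -> V3 -> V3) :
  alg_iso m1 m2 -> alg_iso m2 m3 -> alg_iso m1 m3.
Proof.
case=> f [fl fb fm] [g [gl gb gm]]; exists (g \o f); split.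
- by move=> a u v; rewrite /= fl gl.
- exact: bij_comp.
- by move=> u v; rewrite /= fm gm.
Qed.

Lemma part2 (F : fieldType) (V : vectType F) (mul : V -> V -> V) :
  forall (n : nat) (A B : 'M[F]_n) (n' : nat) (A' B' : 'M[F]_n'),
     lin_indep2 A B -> lin_indep2 A' B' -> alg_iso mul (ABmul A B) ->
     (alg_iso mul (ABmul A' B') <-> pair_equiv_dep A B A' B').
Proof.
move=> n A B n' A' B' LI _ isoAB; split.
  by move=> iso'; apply: iso_to_equiv LI (iso_trans (iso_sym isoAB) iso').
case=> e; subst n'; rewrite !castmx_id => PE.
exact: iso_trans isoAB (iso_of_equiv PE).
Qed.


Lemma existence (F : fieldType) (V : vectType F) (mul : V -> V -> V)
  (Halg : is_assoc_algebra mul) (H3 : R3_zero mul) (U : {vspace V})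
  (HU : is_R2 mul U) (dU : \dim U = 2%N) :
  exists (n : nat) (A B : 'M[F]_n),
     [/\ (2 <= n)%N, lin_indep2 A B & alg_iso mul (ABmul A B)].
Proof.
have Hass : forall u v w, mul (mul u v) w = mul u (mul v w) by case: Halg.
set n := \dim U^C.
set s := vbasis U ++ vbasis U^C.
have Hs : size s == (2 + n)%N by rewrite size_cat !size_tuple dU.
pose X := @Tuple (2 + n) V s Hs.
have XE i : X`_i = s`_i by [].
have spanX : <<X>>%VS = fullv.
  by rewrite /= span_cat !(span_basis (vbasisP _)) addv_complf.
have dimF : \dim (fullv : {vspace V}) = (2 + n)%N.
  by rewrite /n dimv_compl dU subnKC // -dU dimvS // subvf.
have freeX : free X by rewrite /free spanX dimF size_tuple.
have XU i : (i < 2)%N -> X`_i \in U.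
  move=> Hi; have Hi' : (i < \dim U)%N by rewrite dU.
  rewrite XE nth_cat size_tuple Hi'; apply: vbasis_mem.
  by apply: mem_nth; rewrite size_tuple.
have Xexp x : x = \sum_i coord X i x *: X`_i.
  by apply: coord_span; rewrite spanX memvf.
set S := [seq mul X`_i X`_j | i : 'I_(2 + n) <- enum 'I_(2 + n), j : 'I_(2 + n) <- enum 'I_(2 + n)].
have Smul z : z \in S -> forall x, mul z x = 0 /\ mul x z = 0.
  case/allpairsP => [[i j] [_ _ ->]] x; split; first exact: H3.
  by rewrite -Hass H3.
have prodS x y : mul x y \in <<S>>%VS.
  rewrite {1}(Xexp x) {1}(Xexp y) (mul_suml Halg); apply: memv_suml => i _.
  rewrite (mulZl Halg) (mul_sumr Halg); apply: memvZ; apply: memv_suml => j _.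
  rewrite (mulZr Halg); apply: memvZ; apply: memv_span.
  by apply: allpairs_f; rewrite mem_enum.
have UsubS : (U <= <<S>>)%VS := HU.2 _ prodS.
have ann u x : u \in U -> mul u x = 0 /\ mul x u = 0.
  move=> Hu; have HuS := subvP UsubS u Hu.
  rewrite (@coord_span _ _ _ (in_tuple S) u HuS) (mul_suml Halg) (mul_sumr Halg); split; apply: big1 => k _.
    by rewrite (mulZl Halg) (Smul _ (mem_nth 0 (ltn_ord k)) x).1 scaler0.
  by rewrite (mulZr Halg) (Smul _ (mem_nth 0 (ltn_ord k)) x).2 scaler0.
have coordU u (k : 'I_(2 + n)) : u \in U -> (2 <= k)%N -> coord X k u = 0.
  move=> Hu Hk; have Hu' : u \in <<vbasis U>>%VS by rewrite (span_basis (vbasisP U)).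
  rewrite (coord_span Hu') linear_sum big1 // => i _; rewrite linearZ /=.
  have i2 : (i < 2)%N by rewrite -dU.
  have Hi : (i < 2 + n)%N by rewrite (leq_trans i2) // leq_addr.
  have -> : (vbasis U)`_i = X`_(Ordinal Hi) by rewrite XE /= nth_cat size_tuple ltn_ord.
  rewrite coord_free // (_ : (Ordinal Hi == k) = false) ?mulr0 //.
  by apply/negbTE/eqP => E; move: Hk; rewrite -E /= leqNgt i2.
pose f (x : V) : 'cV[F]_(2 + n) := \col_(i < 2 + n) coord X i x.
have k0lt : (0 < 2 + n)%N by [].
have k1lt : (1 < 2 + n)%N by [].
pose k0 := Ordinal k0lt; pose k1 := Ordinal k1lt.
pose Mk k : 'M[F]_(2 + n) := \matrix_(i, j) coord X k (mul X`_i X`_j).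
have expand k x y : coord X k (mul x y) = ((f x)^T *m Mk k *m f y) 0 0.
  rewrite {1}(Xexp x) {1}(Xexp y) (mul_suml Halg) linear_sum [RHS]mxE.
  under [RHS]eq_bigr do rewrite mxE mulr_suml.
  rewrite [RHS]exchange_big /=; apply: eq_bigr => i _.
  rewrite (mulZl Halg) (mul_sumr Halg) linearZ linear_sum /= mulr_sumr.
  apply: eq_bigr => j _; rewrite (mulZr Halg) linearZ /= !mxE.
  ring.
have Cent (k i j : 'I_(2 + n)) : ((i < 2)%N || (j < 2)%N) -> coord X k (mul X`_i X`_j) = 0.
  case/orP => Hij.
    by rewrite (ann _ _ (XU _ Hij)).1 linear0.
  by rewrite (ann _ _ (XU _ Hij)).2 linear0.
have blkM k : blk (drsubmx (Mk k)) = Mk k.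
  rewrite /blk -[RHS]submxK; congr block_mx; apply/matrixP => i j;
    by rewrite !mxE Cent //= ltn_ord ?orbT.
pose A := drsubmx (Mk k0); pose B := drsubmx (Mk k1).
have fm x y : f (mul x y) = ABmul A B (f x) (f y).
  apply/matrixP => k j; rewrite (ord1 j) [LHS]mxE [RHS]mxE.
  case: k => [[|[|kk]] Hk] /=; set kk' := Ordinal Hk.
  - have -> : kk' = k0 by apply: val_inj.
    by rewrite /A blkM expand.
  - have -> : kk' = k1 by apply: val_inj.
    by rewrite /B blkM expand.
  - by rewrite coordU // HU.1.
have LI : lin_indep2 A B.
  move=> a b Hab.
  pose phi u := a * coord X k0 u + b * coord X k1 u.
  have phiprod x y : phi (mul x y) = 0.
    have E0 := fm x y; move/matrixP/(_ k0 0): E0; rewrite [LHS]mxE [RHS]mxE /= /phi => ->.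
    have E1 := fm x y; move/matrixP/(_ k1 0): E1; rewrite [LHS]mxE [RHS]mxE /= => ->.
    rewrite -bil_lin.
    have -> : a *: blk A + b *: blk B = 0.
      by rewrite /blk !scale_block_mx add_block_mx !scaler0 !addr0 Hab block_mx0.
    by rewrite mulmx0 mul0mx mxE.
  have phiU u : u \in U -> phi u = 0.
    move=> Hu; rewrite (@coord_span _ _ _ (in_tuple S) u (subvP UsubS u Hu)) /phi.
    rewrite !linear_sum /= !mulr_sumr -big_split big1 // => l _.
    rewrite !linearZ /= mulrCA [b * _]mulrCA -mulrDr.
    have := mem_nth 0 (ltn_ord l); case/allpairsP => [[i j] [_ _ Ei]].
    by rewrite /= Ei; have := phiprod X`_i X`_j; rewrite /phi => ->; rewrite mulr0.
  have c00 : coord X k0 X`_k0 = 1 by rewrite coord_free // eqxx.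
  have c11 : coord X k1 X`_k1 = 1 by rewrite coord_free // eqxx.
  have c01 : coord X k1 X`_k0 = 0 by rewrite coord_free.
  have c10 : coord X k0 X`_k1 = 0 by rewrite coord_free.
  have := phiU _ (XU _ (isT : (0 < 2)%N)); rewrite /phi -[0%N]/(k0 : nat) c00 c01.
  have := phiU _ (XU _ (isT : (1 < 2)%N)); rewrite /phi -[1%N]/(k1 : nat) c11 c10.
  by rewrite !mulr0 !mulr1 addr0 add0r => -> ->.
exists n, A, B; split => //.
  exact: indep_n2 LI.
exists f; split.
- by move=> a u v; apply/matrixP => i j; rewrite !mxE linearP.
- exists (fun c : 'cV_(2 + n) => \sum_i c i 0 *: X`_i).
    by move=> x; rewrite {2}(Xexp x); apply: eq_bigr => i _; rewrite mxE.
  move=> c; apply/matrixP => k j; rewrite (ord1 j) mxE linear_sum.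
  under eq_bigr do rewrite linearZ /= coord_free //.
  rewrite (bigD1 k) //= eqxx mulr1 big1 ?addr0 // => i /negbTE ->.
  by rewrite mulr0.
- exact: fm.
Qed.


Theorem lemma3p3 (F : fieldType) (Fclosed : GRing.closed_field_axiom F)
  (Fchar : (2%:R : F) != 0)
  (V : vectType F) (mul : V -> V -> V) (Halg : is_assoc_algebra mul)
  (H3 : R3_zero mul)
  (H2 : exists U : {vspace V}, is_R2 mul U /\ \dim U = 2%N) :
  (exists (n : nat) (A B : 'M[F]_n),
     [/\ (2 <= n)%N, lin_indep2 A B & alg_iso mul (ABmul A B)]) /\
  (forall (n : nat) (A B : 'M[F]_n) (n' : nat) (A' B' : 'M[F]_n'),
     lin_indep2 A B -> lin_indep2 A' B' -> alg_iso mul (ABmul A B) ->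
     (alg_iso mul (ABmul A' B') <-> pair_equiv_dep A B A' B')).
Proof.
split; last exact: part2.
case: H2 => U [HU dU].
have := existence Halg H3 HU dU. by move=> H; exact H.
Qed.
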